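(* Let $S\subset\mathbb{R}^n$ and $U_0\subset\mathbb{R}^{n\times n}$ be polyhedra (a safety region and an initial uncertainty set) and let $A_\star\in U_0$ be the unknown true matrix. Then one-step safe learning is possible if and only if the One-Step Safe Learning Algorithm described below, run with an arbitrary choice of cost vector $c\in\mathbb{R}^n$ and an arbitrary constant $\varepsilon\in(0,1]$, returns a matrix (rather than declaring that one-step safe learning is impossible).
   Context: System: $x_{t+1}=A_\star x_t$ with $A_\star$ unknown, $A_\star\in U_0$. Given measurements $(x_j,y_j)$, $j=1,\dots,k$, with $y_j=A_\star x_j$, let $U_k=\{A\in U_0\mid Ax_j=y_j,\ j=1,\dots,k\}$ and let $S^1_k=\{x\in S\mid Ax\in S\ \forall A\in U_k\}$ (the set of points that are one-step safe under all matrices consistent with the data). Definition (one-step safe learning). One-step safe learning is possible if for some nonnegative integer $m$ one can sequentially choose vectors $x_k\in S$, $k=1,\dots,m$ (each choice may depend on the previous observations), observing $y_k=A_\star x_k$ after each choice, such that (1) (safety) for $k=1,\dots,m$, $Ax_k\in S$ for all $A\in U_{k-1}$, and (2) (learning) $U_m$ is a singleton. One-Step Safe Learning Algorithm (input $S,U_0,c,\varepsilon$). For $k=0,1,\dots,n-1$: (a) if $U_k$ is a singleton, return its unique element; (b) let $x_k^\star$ be an optimal solution of $\min\{c^Tx \mid x\in S^1_k\}$ (a linear program); (c) if $x_k^\star$ is linearly independent from $\{x_1,\dots,x_k\}$, set $x_{k+1}=x_k^\star$; otherwise compute a basis $B_k\subset S^1_k$ of $\mathrm{span}(S^1_k)$,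 and if some $z\in B_k$ is linearly independent from $\{x_1,\dots,x_k\}$, set $x_{k+1}=(1-\varepsilon)x_k^\star+\varepsilon z$ for the first such $z$, while if no element of $B_k$ is linearly independent from $\{x_1,\dots,x_k\}$, stop and declare that one-step safe learning is impossible; (d) observe $y_{k+1}=A_\star x_{k+1}$. If the loop completes, let $X=[x_1,\dots,x_n]$, $Y=[y_1,\dots,y_n]$ and return $YX^{-1}$. *)

(* Defs.v *)
From HB Require Import structures.
From mathcomp Require Import all_boot all_order all_algebra.
From mathcomp Require Import reals.
Set Implicit Arguments. Unset Strict Implicit. Unset Printing Implicit Defensive.
Import Order.TTheory GRing.Theory Num.Theory.
Local Open Scope ring_scope.

Section Defs.
Variables (R : realType) (n : nat).

Notation vec := 'cV[R]_n.
Notation mat := 'M[R]_n.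

Definition polyhedronV (S : vec -> Prop) : Prop :=
  exists (m : nat) (M : 'M[R]_(m, n)) (b : 'cV[R]_m),
    forall x, S x <-> (forall i, (M *m x) i 0 <= b i 0).

Definition polyhedronM (U : mat -> Prop) : Prop :=
  exists (m : nat) (M : 'M[R]_(m, n * n)) (b : 'cV[R]_m),
    forall A, U A <-> (forall i, (M *m (mxvec A)^T) i 0 <= b i 0).

Definition Uset (U0 : mat -> Prop) (data : seq (vec * vec)) (A : mat) : Prop :=
  U0 A /\ (forall p, p \in data -> A *m p.1 = p.2).

Definition S1set (S : vec -> Prop) (U0 : mat -> Prop) (data : seq (vec * vec))
  (x : vec) : Prop :=
  S x /\ (forall A, Uset U0 data A -> S (A *m x)).

Definition is_singleton (U : mat -> Prop) : Prop :=
  exists A, U A /\ (forall B, U B -> B = A).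

Definition rowsmx (xs : seq vec) : 'M[R]_(size xs, n) :=
  \matrix_(i < size xs) (xs`_i)^T.

Definition indep_from (x : vec) (xs : seq vec) : Prop :=
  ~ (x^T <= rowsmx xs)%MS.

Definition basis_in (P : vec -> Prop) (B : seq vec) : Prop :=
  (forall z, z \in B -> P z) /\ row_free (rowsmx B) /\
  (forall x, P x -> (x^T <= rowsmx B)%MS).

Definition lp_opt (c : vec) (P : vec -> Prop) (x : vec) : Prop :=
  P x /\ (forall y, P y -> (c^T *m x) 0 0 <= (c^T *m y) 0 0).

Definition xs_of (data : seq (vec * vec)) : seq vec := map fst data.

Definition Xmat (data : seq (vec * vec)) : mat :=
  \matrix_(i < n, j < n) (nth (0, 0) data j).1 i 0.
Definition Ymat (data : seq (vec * vec)) : mat :=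
  \matrix_(i < n, j < n) (nth (0, 0) data j).2 i 0.

(* Since
   Astar is fixed, the observations are deterministic, so an adaptive choice
   rule realizes exactly some sequence x_1..x_m; we quantify over these. *)
Definition data_of (Astar : mat) (xs : seq vec) : seq (vec * vec) :=
  [seq (x, Astar *m x) | x <- xs].

Definition one_step_safe_learning_possible (S : vec -> Prop) (U0 : mat -> Prop)
  (Astar : mat) : Prop :=
  exists xs : seq vec,
    (forall k, (k < size xs)%N ->
       S (xs`_k) /\
       (forall A, Uset U0 (data_of Astar (take k xs)) A -> S (A *m xs`_k))) /\
    is_singleton (Uset U0 (data_of Astar xs)).

Inductive outcome : Type :=
| Returns of mat
| Impossible.

(* alg_run S U0 Astar c eps data out : starting from iteration k = size data,
   with measurements data collected so far, some execution of the
   One-Step Safe Learning Algorithm ends with outcome out.  All admissible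
   choices (optimal LP solution, basis B_k and its ordering) are allowed. *)
Inductive alg_run (S : vec -> Prop) (U0 : mat -> Prop) (Astar : mat) (c : vec)
  (eps : R) : seq (vec * vec) -> outcome -> Prop :=
| run_single data A :
    (size data < n)%N ->
    Uset U0 data A -> (forall B, Uset U0 data B -> B = A) ->
    alg_run S U0 Astar c eps data (Returns A)
| run_indep data xstar out :
    (size data < n)%N ->
    ~ is_singleton (Uset U0 data) ->
    lp_opt c (S1set S U0 data) xstar ->
    indep_from xstar (xs_of data) ->
    alg_run S U0 Astar c eps (rcons data (xstar, Astar *m xstar)) out ->
    alg_run S U0 Astar c eps data out
| run_perturb data xstar (B : seq vec) j out :
    (size data < n)%N ->
    ~ is_singleton (Uset U0 data) ->
    lp_opt c (S1set S U0 data) xstar ->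
    ~ indep_from xstar (xs_of data) ->
    basis_in (S1set S U0 data) B ->
    (j < size B)%N ->
    indep_from (B`_j) (xs_of data) ->
    (forall i, (i < j)%N -> ~ indep_from (B`_i) (xs_of data)) ->
    let x := (1 - eps) *: xstar + eps *: B`_j in
    alg_run S U0 Astar c eps (rcons data (x, Astar *m x)) out ->
    alg_run S U0 Astar c eps data out
| run_stop data xstar (B : seq vec) :
    (size data < n)%N ->
    ~ is_singleton (Uset U0 data) ->
    lp_opt c (S1set S U0 data) xstar ->
    ~ indep_from xstar (xs_of data) ->
    basis_in (S1set S U0 data) B ->
    (forall i, (i < size B)%N -> ~ indep_from (B`_i) (xs_of data)) ->
    alg_run S U0 Astar c eps data Impossible
| run_done data :
    size data = n ->
    alg_run S U0 Astar c eps data (Returns (Ymat data *m invmx (Xmat data))).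

End Defs.

(* Main.v *)
Require Import Defs.
From HB Require Import structures.
From mathcomp Require Import all_boot all_order all_algebra.
From mathcomp Require Import reals.
From mathcomp Require Import zify ring lra.
Set Implicit Arguments. Unset Strict Implicit. Unset Printing Implicit Defensive.
Import Order.TTheory GRing.Theory Num.Theory.
Local Open Scope ring_scope.

Lemma nnb (b : bool) : ~ ~ b -> b.
Proof. by case: b => // h; exfalso; apply: h. Qed.

Section Proofs.
Variables (R : realType) (n : nat) (S : 'cV[R]_n -> Prop) (U0 : 'M[R]_n -> Prop)
  (Astar : 'M[R]_n) (c : 'cV[R]_n) (eps : R).

Lemma kill p (M : 'M[R]_n) (xs : seq 'cV[R]_n) (v : 'M[R]_(n, p)) :
  (forall x, x \in xs -> M *m x = 0) -> (v^T <= rowsmx xs)%MS -> M *m v = 0.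
Proof.
move=> H /submxP [D hD].
have E: rowsmx xs *m M^T = 0.
  apply/row_matrixP => i; rewrite row_mul /rowsmx rowK row0 -trmx_mul H ?trmx0 //.
  exact: mem_nth.
by rewrite -[M *m v]trmxK trmx_mul hD -mulmxA E mulmx0 trmx0.
Qed.

Lemma S_conv : polyhedronV S -> forall u v (e : R), 0 <= e <= 1 ->
  S u -> S v -> S ((1 - e) *: u + e *: v).
Proof.
case=> m [M [b hS]] u v e /andP[e0 e1] /hS Su /hS Sv; apply/hS => i.
rewrite mulmxDr -!scalemxAr; set Mu := M *m u; set Mv := M *m v.
have := Su i; have := Sv i; rewrite -/Mu -/Mv.
rewrite !mxE => h1 h2; nra.
Qed.

Lemma S1_conv data : polyhedronV S -> forall u v (e : R), 0 <= e <= 1 ->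
  S1set S U0 data u -> S1set S U0 data v -> S1set S U0 data ((1 - e) *: u + e *: v).
Proof.
move=> hP u v e he [hu1 hu2] [hv1 hv2]; split; first exact: S_conv.
move=> A hA; rewrite mulmxDr -!scalemxAr; apply: S_conv => //; [exact: hu2|exact: hv2].
Qed.

Definition Inv (data : seq ('cV[R]_n * 'cV[R]_n)) :=
  (forall p, p \in data -> p.2 = Astar *m p.1) /\
  (forall k, (k < size data)%N -> S1set S U0 (take k data) (nth (0, 0) data k).1) /\
  \rank (rowsmx (xs_of data)) = size data.

Lemma rank_rcons (xs : seq 'cV[R]_n) x : \rank (rowsmx xs) = size xs ->
  ~ (x^T <= rowsmx xs)%MS -> \rank (rowsmx (rcons xs x)) = (size xs).+1.
Proof.
move=> hr hx.
set L := rowsmx xs; set L' := rowsmx (rcons xs x).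
have sLL': (L <= L')%MS.
  apply/row_subP => i.
  have hi : (i < size (rcons xs x))%N by rewrite size_rcons ltnS ltnW.
  have := row_sub (Ordinal hi) L'; rewrite /L' /L /rowsmx !rowK /= nth_rcons ltn_ord.
  by [].
have sx: (x^T <= L')%MS.
  have hi : (size xs < size (rcons xs x))%N by rewrite size_rcons.
  by have := row_sub (Ordinal hi) L'; rewrite /L' /rowsmx rowK /= nth_rcons ltnn eqxx.
have [le eq] := mxrank_leqif_sup sLL'.
have hne: \rank L != \rank L'.
  rewrite eq; apply/negP => H; apply: hx; exact: submx_trans sx H.
have := rank_leq_row L'; have := size_rcons xs x.
move: hne le; rewrite -/L hr; lia.
Qed.

Lemma step_inv data x : Inv data -> S1set S U0 data x ->
  ~ (x^T <= rowsmx (xs_of data))%MS -> Inv (rcons data (x, Astar *m x)).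
Proof.
case=> [ha [hb hc]] hS hx; split; [|split].
- move=> p; rewrite mem_rcons in_cons => /orP[/eqP -> //|]; exact: ha.
- move=> k; rewrite size_rcons ltnS leq_eqVlt => /orP[/eqP ->|hk].
  + by rewrite -cats1 take_size_cat // nth_cat ltnn subnn.
  + by rewrite -cats1 takel_cat ?(ltnW hk) // nth_cat hk; exact: hb.
- rewrite /xs_of map_rcons rank_rcons ?size_rcons ?size_map //.
  move: hc; rewrite /xs_of => ->; by rewrite size_map.
Qed.

Lemma dataK data : (forall p, p \in data -> p.2 = Astar *m p.1) ->
  data_of Astar (xs_of data) = data.
Proof.
elim: data => [|[a b] d IH] ha //=.
rewrite /data_of /xs_of /= in IH *.
rewrite IH; last by move=> p hp; apply: ha; rewrite in_cons hp orbT.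
by rewrite -(ha (a, b)) ?mem_head.
Qed.

Lemma learn_of data : Inv data -> is_singleton (Uset U0 data) ->
  one_step_safe_learning_possible S U0 Astar.
Proof.
case=> [ha [hb hc]] hs; exists (xs_of data); rewrite dataK //; split => // k.
rewrite size_map => hk; rewrite /xs_of -map_take dataK.
  by rewrite (nth_map (0, 0)) //; exact: hb.
by move=> p /mem_take /ha.
Qed.

Lemma ret_learn data out : alg_run S U0 Astar c eps data out ->
  polyhedronV S -> 0 < eps <= 1 -> U0 Astar -> Inv data ->
  (exists A, out = Returns A) -> one_step_safe_learning_possible S U0 Astar.
Proof.
move=> hrun hP he hU; elim: hrun.
- move=> d A _ hA huniq hI _; apply: (learn_of hI); exists A; split => //.
- move=> d xstar o _ _ hopt hind _ IH hI hex; apply: IH hex.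
  by apply: step_inv => //; case: hopt.
- move=> d xstar B j o _ _ hopt hnind hbas hj hindj _ x _ IH hI hex; apply: IH hex.
  have [e0 e1] : 0 < eps /\ eps <= 1 by case/andP: he.
  apply: step_inv => //.
    apply: S1_conv => //; first by rewrite ltW.
      by case: hopt.
    by case: hbas => h _; apply: h; exact: mem_nth.
  move=> hx; apply: hindj.
  have hs : (xstar^T <= rowsmx (xs_of d))%MS by exact: nnb.
  have ->: (B`_j)^T = eps^-1 *: (x^T - (1 - eps) *: xstar^T).
    have hxT : x^T = (1 - eps) *: xstar^T + eps *: (B`_j)^T.
      by apply/matrixP => i k; rewrite !mxE.
    rewrite hxT addrAC subrr add0r scalerA mulVf ?scale1r //.
    by rewrite gt_eqF.
  by apply: scalemx_sub; apply: addmx_sub => //; rewrite -scaleNr; apply: scalemx_sub.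
- by move=> d xstar B _ _ _ _ _ _ _ [A].
- move=> d hd [ha [hb hc]] _; apply: (learn_of (conj ha (conj hb hc))).
  exists Astar; split; first by split => // p /ha ->.
  move=> B hB; apply/eqP; rewrite -subr_eq0; apply/eqP.
  rewrite -[B - Astar]mulmx1; apply: (kill (xs := xs_of d)).
    move=> y /mapP [p hp ->]; rewrite mulmxBl (hB.2 p hp) (ha p hp) subrr //.
  by apply: submx_full; rewrite /row_full hc hd.
Qed.

Lemma stop_lemma data : (forall p, p \in data -> p.2 = Astar *m p.1) -> U0 Astar ->
  ~ is_singleton (Uset U0 data) ->
  (forall x, S1set S U0 data x -> (x^T <= rowsmx (xs_of data))%MS) ->
  ~ one_step_safe_learning_possible S U0 Astar.
Proof.
move=> ha hU hns hspan [xs' [hsafe hsing]].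
have key : forall A, Uset U0 data A -> forall x : 'cV[R]_n,
    (x^T <= rowsmx (xs_of data))%MS -> A *m x = Astar *m x.
  move=> A hA x hx; apply/eqP; rewrite -subr_eq0 -mulmxBl; apply/eqP.
  apply: (kill _ hx) => y /mapP [p hp ->]; by rewrite mulmxBl (hA.2 p hp) (ha p hp) subrr.
have sub : forall k, (k <= size xs')%N -> forall A, Uset U0 data A ->
    Uset U0 (data_of Astar (take k xs')) A.
  elim=> [|k IH] hk A hA.
    by rewrite take0; split; [exact: hA.1| move=> p; rewrite in_nil].
  rewrite (take_nth 0) // /data_of map_rcons; split; first exact: hA.1.
  move=> p; rewrite mem_rcons in_cons => /orP [/eqP -> /= | hp].
    apply: key => //; apply: hspan.
    have [hS hS1] := hsafe k hk; split => // B hB; apply: hS1; apply: IH => //.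
    exact: ltnW.
  exact: (IH (ltnW hk) A hA).2 p hp.
have sub' : forall A, Uset U0 data A -> Uset U0 (data_of Astar xs') A.
  by move=> A /(sub _ (leqnn _)); rewrite take_size.
case: hsing => A0 [hA0 huniq].
have hAs : Uset U0 data Astar by split => // p hp; rewrite (ha p hp).
apply: hns; exists Astar; split => // B hB.
by rewrite (huniq _ (sub' _ hB)) (huniq _ (sub' _ hAs)).
Qed.

Lemma learn_ret data out : alg_run S U0 Astar c eps data out -> U0 Astar ->
  (forall p, p \in data -> p.2 = Astar *m p.1) ->
  one_step_safe_learning_possible S U0 Astar -> exists A, out = Returns A.
Proof.
move=> hrun hU; elim: hrun.
- by move=> d A; exists A.
- move=> d xstar o _ _ _ _ _ IH ha hl; apply: IH hl.
  by move=> p; rewrite mem_rcons in_cons => /orP[/eqP -> //|]; exact: ha.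
- move=> d xstar B j o _ _ _ _ _ _ _ _ x _ IH ha hl; apply: IH hl.
  by move=> p; rewrite mem_rcons in_cons => /orP[/eqP -> //|]; exact: ha.
- move=> d xstar B _ hns _ _ hbas hnot ha hl; exfalso.
  apply: (stop_lemma ha hU hns _ hl) => x hx.
  case: hbas => _ [_ hspan]; apply: submx_trans (hspan x hx) _.
  apply/row_subP => i; rewrite /rowsmx rowK; exact: nnb (hnot i (ltn_ord i)).
- by move=> d _; eexists.
Qed.

End Proofs.

Theorem theorem7 (R : realType) (n : nat)
  (S : 'cV[R]_n -> Prop) (U0 : 'M[R]_n -> Prop) (Astar : 'M[R]_n) :
  polyhedronV S -> polyhedronM U0 -> U0 Astar ->
  forall (c : 'cV[R]_n) (eps : R), 0 < eps <= 1 ->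
  forall out : outcome R n, alg_run S U0 Astar c eps [::] out ->
  (one_step_safe_learning_possible S U0 Astar <-> exists A, out = Returns A).
Proof.
move=> hP _ hU c eps he out hrun; split.
  by apply: (learn_ret hrun hU) => p; rewrite in_nil.
apply: (ret_learn hrun hP he hU); split; [|split].
- by move=> p; rewrite in_nil.
- by [].
- by apply/eqP; rewrite -leqn0; exact: rank_leq_row.
Qed.
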